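(* Let $g(m)=10^{m/5}$ and \[ f(m)=\begin{cases} \binom{m}{2} & \text{if } 1\le m\le 8;\\ \binom{\lfloor m/2\rfloor}{2}\binom{\lceil m/2\rceil}{2}-(\lfloor m/2\rfloor-1)(\lceil m/2\rceil-1)+1 & \text{if } 9\le m\le 13;\\ 10^{\frac{m-1}{5}}+\frac{m+144}{30}\cdot 6^{\frac{m-6}{5}} & \text{if } 14\le m\le 30;\\ 10^{\frac{m-1}{5}}+\frac{m-1}{5}\cdot 6^{\frac{m-6}{5}} & \text{if } m\ge 31. \end{cases} \] Let $n\ge 14$ be an integer. Then: (1) for $r\in\{4,5,6\}$, $\binom{r-1}{2}f(n-r)+(r-1)f(n-r-1)+g(n-r-2)<f(n)$; (2) for $r\in\{4,5,6\}$, $\binom{r-1}{2}f(n-r)+r\,g(n-r-2)+g(n-r-3)<f(n)$; (3) for $r\in\{4,6\}$, $\binom{r-1}{2}f(n-r)+(r-1)g(n-r-1)+6^{\frac{n-r-1}{5}}<f(n)$; (4) for $r\in\{4,6\}$, $\binom{r-1}{2}f(n-r)+\frac{f(4)}{g(4)}(r-1)g(n-r-1)+g(n-r-3)<f(n)$. *)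

(* Defs.v *)
From Stdlib Require Import Reals Lra Lia.
Open Scope R_scope.

Definition gP (m : nat) : R := Rpower 10 (INR m / 5).

Definition fP (m : nat) : R :=
  if (m <=? 8)%nat then C m 2
  else if (m <=? 13)%nat then
    let a := (m / 2)%nat in
    let b := ((m + 1) / 2)%nat in
    C a 2 * C b 2 - (INR a - 1) * (INR b - 1) + 1
  else if (m <=? 30)%nat then
    Rpower 10 ((INR m - 1) / 5) + (INR m + 144) / 30 * Rpower 6 ((INR m - 6) / 5)
  else
    Rpower 10 ((INR m - 1) / 5) + (INR m - 1) / 5 * Rpower 6 ((INR m - 6) / 5).

(* Main.v *)
Require Import Defs.
From Stdlib Require Import Reals Lra Lia Factorial.
Open Scope R_scope.


Definition X := Rpower 10 (1/5).
Definition Y := Rpower 6 (1/5).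

Lemma Xpos : 0 < X. Proof. unfold X, Rpower; apply exp_pos. Qed.
Lemma Ypos : 0 < Y. Proof. unfold Y, Rpower; apply exp_pos. Qed.

Lemma Rp_pow (b : R) (k : nat) : 0 < b -> Rpower b (INR k / 5) = (Rpower b (1/5)) ^ k.
Proof.
  intro hb. rewrite <- Rpower_pow by (unfold Rpower; apply exp_pos).
  rewrite Rpower_mult. f_equal. lra.
Qed.

Lemma gP_eq k : gP k = X ^ k. Proof. unfold gP, X. apply Rp_pow. lra. Qed.
Lemma Y_eq k : Rpower 6 (INR k / 5) = Y ^ k. Proof. unfold Y. apply Rp_pow. lra. Qed.

Lemma X5 : X ^ 5 = 10.
Proof. rewrite <- gP_eq. unfold gP. simpl. replace ((1+1+1+1+1)/5) with 1 by lra.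
  apply Rpower_1; lra. Qed.
Lemma Y5 : Y ^ 5 = 6.
Proof. rewrite <- Y_eq. simpl. replace ((1+1+1+1+1)/5) with 1 by lra.
  apply Rpower_1; lra. Qed.

Lemma Xpow5 k : X ^ (5 + k) = 10 * X ^ k. Proof. rewrite pow_add, X5; ring. Qed.
Lemma Ypow5 k : Y ^ (5 + k) = 6 * Y ^ k. Proof. rewrite pow_add, Y5; ring. Qed.

Lemma C2 k : (2 <= k)%nat -> C k 2 = INR k * (INR k - 1) / 2.
Proof.
  intro hk. destruct k as [|[|k]]; try lia.
  unfold C. replace (S (S k) - 2)%nat with k by lia.
  change (fact (S (S k))) with (S (S k) * (S k * fact k))%nat.
  rewrite !mult_INR. simpl (fact 2).
  rewrite !S_INR. simpl INR.
  field. apply INR_fact_neq_0.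
Qed.

Lemma fP_small k : (2 <= k <= 8)%nat -> fP k = INR k * (INR k - 1) / 2.
Proof. intro hk. unfold fP. replace (k <=? 8)%nat with true
  by (symmetry; apply Nat.leb_le; lia). apply C2; lia. Qed.

Ltac c2s := rewrite ?C2 by lia; rewrite ?S_INR; simpl INR.

Lemma fP9 : fP 9 = 49. Proof. unfold fP. simpl Nat.leb. cbv iota. simpl Nat.div. c2s. lra. Qed.
Lemma fP10 : fP 10 = 85. Proof. unfold fP. simpl Nat.leb. cbv iota. simpl Nat.div. c2s. lra. Qed.
Lemma fP11 : fP 11 = 131. Proof. unfold fP. simpl Nat.leb. cbv iota. simpl Nat.div. c2s. lra. Qed.
Lemma fP12 : fP 12 = 201. Proof. unfold fP. simpl Nat.leb. cbv iota. simpl Nat.div. c2s. lra. Qed.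
Lemma fP13 : fP 13 = 286. Proof. unfold fP. simpl Nat.leb. cbv iota. simpl Nat.div. c2s. lra. Qed.

Lemma pw10 t : (1 <= t)%nat -> Rpower 10 ((INR t - 1) / 5) = X ^ (t - 1).
Proof. intro h. rewrite <- gP_eq. unfold gP. rewrite minus_INR by lia. simpl INR. reflexivity. Qed.
Lemma pw6 t : (6 <= t)%nat -> Rpower 6 ((INR t - 6) / 5) = Y ^ (t - 6).
Proof. intro h. rewrite <- Y_eq. rewrite minus_INR by lia. f_equal. f_equal. f_equal.
  simpl. lra. Qed.

Lemma fP_mid t : (14 <= t <= 30)%nat -> fP t = X ^ (t - 1) + (INR t + 144) / 30 * Y ^ (t - 6).
Proof. intro h. unfold fP.
  replace (t <=? 8)%nat with false by (symmetry; apply Nat.leb_gt; lia).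
  replace (t <=? 13)%nat with false by (symmetry; apply Nat.leb_gt; lia).
  replace (t <=? 30)%nat with true by (symmetry; apply Nat.leb_le; lia).
  rewrite pw10, pw6 by lia. reflexivity. Qed.

Lemma fP_big t : (31 <= t)%nat -> fP t = X ^ (t - 1) + (INR t - 1) / 5 * Y ^ (t - 6).
Proof. intro h. unfold fP.
  replace (t <=? 8)%nat with false by (symmetry; apply Nat.leb_gt; lia).
  replace (t <=? 13)%nat with false by (symmetry; apply Nat.leb_gt; lia).
  replace (t <=? 30)%nat with false by (symmetry; apply Nat.leb_gt; lia).
  rewrite pw10, pw6 by lia. reflexivity. Qed.

Lemma fP4gP4 : fP 4 / gP 4 = 6 * X / 10.
Proof. rewrite fP_small by lia. rewrite gP_eq. simpl INR.
  pose proof Xpos as H. pose proof X5 as H0.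
  replace (X^4) with (10 / X) by (rewrite <- H0; field; lra).
  field. lra. Qed.

Lemma Xbnd : 15848931/10000000 <= X <= 15848932/10000000.
Proof. pose proof Xpos. pose proof X5. split; apply Rnot_lt_le; intro h.
  - assert (X ^ 5 <= (15848931/10000000)^5) by (apply pow_incr; lra). lra.
  - assert ((15848932/10000000)^5 <= X^5) by (apply pow_incr; lra). lra. Qed.
Lemma Ybnd : 14309690/10000000 <= Y <= 14309691/10000000.
Proof. pose proof Ypos. pose proof Y5. split; apply Rnot_lt_le; intro h.
  - assert (Y ^ 5 <= (14309690/10000000)^5) by (apply pow_incr; lra). lra.
  - assert ((14309691/10000000)^5 <= Y^5) by (apply pow_incr; lra). lra. Qed.

Lemma growth m : (INR m + 37) * Y ^ m <= 37 * X ^ m.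
Proof.
  pose proof Xbnd; pose proof Ybnd.
  induction m.
  - simpl. lra.
  - rewrite S_INR. simpl pow.
    pose proof (pos_INR m). pose proof (pow_lt Y m Ypos). pose proof (pow_lt X m Xpos).
    nra.
Qed.
Lemma Xpow5' k : X ^ (S (S (S (S (S k))))) = 10 * X ^ k. Proof. apply Xpow5. Qed.
Lemma Ypow5' k : Y ^ (S (S (S (S (S k))))) = 6 * Y ^ k. Proof. apply Ypow5. Qed.

Ltac fixsubs := repeat match goal with |- context [(?a - ?b)%nat] =>
   let k := eval compute in (a - b)%nat in change (a - b)%nat with k end.
Ltac rwfP := repeat match goal with |- context [fP ?k] =>
   first [ rewrite (fP_small k) by lia | rewrite fP9 | rewrite fP10 | rewrite fP11
         | rewrite fP12 | rewrite fP13 | rewrite (fP_mid k) by lia | rewrite (fP_big k) by lia ] end.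
Ltac conc :=
  rewrite ?fP4gP4; fixsubs; rewrite ?C2 by lia; rwfP; fixsubs;
  rewrite ?gP_eq, ?Y_eq; repeat rewrite Xpow5'; repeat rewrite Ypow5'; rewrite ?pow_O;
  rewrite ?S_INR, ?INR_0;
  pose proof Xbnd; pose proof Ybnd; pose proof Xpos; pose proof Ypos; pose proof X5;
  assert ((15848931/10000000)^2 <= X^2 <= (15848932/10000000)^2) by (split; apply pow_incr; lra);
  assert ((15848931/10000000)^3 <= X^3 <= (15848932/10000000)^3) by (split; apply pow_incr; lra);
  assert ((15848931/10000000)^4 <= X^4 <= (15848932/10000000)^4) by (split; apply pow_incr; lra);
  assert ((14309690/10000000)^2 <= Y^2 <= (14309691/10000000)^2) by (split; apply pow_incr; lra);
  assert ((14309690/10000000)^3 <= Y^3 <= (14309691/10000000)^3) by (split; apply pow_incr; lra);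
  assert ((14309690/10000000)^4 <= Y^4 <= (14309691/10000000)^4) by (split; apply pow_incr; lra);
  lra.


Ltac fixsubm m := repeat match goal with |- context [(m + ?c - ?b)%nat] =>
   let k := eval compute in (c - b)%nat in replace (m + c - b)%nat with (m + k)%nat by lia end.
Ltac big m :=
  rewrite ?fP4gP4; fixsubm m; fixsubs; rewrite ?C2 by lia;
  repeat (rewrite (fP_big (m + _)) by lia); fixsubm m;
  rewrite ?gP_eq, ?Y_eq, ?plus_INR, !pow_add; repeat rewrite Xpow5'; repeat rewrite Ypow5'; rewrite ?pow_O;
  rewrite ?S_INR, ?INR_0;
  pose proof Xbnd; pose proof Ybnd; pose proof Xpos; pose proof Ypos; pose proof X5;
  pose proof (growth m);
  pose proof (pos_INR m);
  pose proof (pow_lt X m Xpos); pose proof (pow_lt Y m Ypos);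
  set (P := X ^ m) in *; set (Q := Y ^ m) in *; set (N := INR m) in *;
  assert (0 <= N * Q) by (apply Rmult_le_pos; lra);
  assert ((15848931/10000000)^2 * P <= P * X^2 <= (15848932/10000000)^2 * P) by
     (split; rewrite (Rmult_comm P); apply Rmult_le_compat_r; try lra; apply pow_incr; lra);
  assert ((15848931/10000000)^3 * P <= P * X^3 <= (15848932/10000000)^3 * P) by
     (split; rewrite (Rmult_comm P); apply Rmult_le_compat_r; try lra; apply pow_incr; lra);
  assert ((15848931/10000000)^4 * P <= P * X^4 <= (15848932/10000000)^4 * P) by
     (split; rewrite (Rmult_comm P); apply Rmult_le_compat_r; try lra; apply pow_incr; lra);
  assert ((15848931/10000000)^1 * P <= P * X^1 <= (15848932/10000000)^1 * P) by
     (split; rewrite (Rmult_comm P); apply Rmult_le_compat_r; try lra; apply pow_incr; lra);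
  assert ((14309690/10000000)^1 * Q <= Q * Y^1 <= (14309691/10000000)^1 * Q) by
     (split; rewrite (Rmult_comm Q); apply Rmult_le_compat_r; try lra; apply pow_incr; lra);
  assert ((14309690/10000000)^2 * Q <= Q * Y^2 <= (14309691/10000000)^2 * Q) by
     (split; rewrite (Rmult_comm Q); apply Rmult_le_compat_r; try lra; apply pow_incr; lra);
  assert ((14309690/10000000)^3 * Q <= Q * Y^3 <= (14309691/10000000)^3 * Q) by
     (split; rewrite (Rmult_comm Q); apply Rmult_le_compat_r; try lra; apply pow_incr; lra);
  assert ((14309690/10000000)^4 * Q <= Q * Y^4 <= (14309691/10000000)^4 * Q) by
     (split; rewrite (Rmult_comm Q); apply Rmult_le_compat_r; try lra; apply pow_incr; lra);
  assert ((14309690/10000000)^1 * (N*Q) <= (N*Q) * Y^1 <= (14309691/10000000)^1 * (N*Q)) by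
     (split; rewrite (Rmult_comm (N*Q)); apply Rmult_le_compat_r; try lra; apply pow_incr; lra);
  assert ((14309690/10000000)^2 * (N*Q) <= (N*Q) * Y^2 <= (14309691/10000000)^2 * (N*Q)) by
     (split; rewrite (Rmult_comm (N*Q)); apply Rmult_le_compat_r; try lra; apply pow_incr; lra);
  assert ((14309690/10000000)^3 * (N*Q) <= (N*Q) * Y^3 <= (14309691/10000000)^3 * (N*Q)) by
     (split; rewrite (Rmult_comm (N*Q)); apply Rmult_le_compat_r; try lra; apply pow_incr; lra);
  assert ((14309690/10000000)^4 * (N*Q) <= (N*Q) * Y^4 <= (14309691/10000000)^4 * (N*Q)) by
     (split; rewrite (Rmult_comm (N*Q)); apply Rmult_le_compat_r; try lra; apply pow_incr; lra);
  lra.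


Theorem lemma2p11 (n : nat) (hn : (14 <= n)%nat) :
  (forall r : nat, (r = 4 \/ r = 5 \/ r = 6)%nat ->
     C (r - 1)%nat 2 * fP (n - r)%nat + INR (r - 1)%nat * fP (n - r - 1)%nat + gP (n - r - 2)%nat < fP n) /\
  (forall r : nat, (r = 4 \/ r = 5 \/ r = 6)%nat ->
     C (r - 1)%nat 2 * fP (n - r)%nat + INR r * gP (n - r - 2)%nat + gP (n - r - 3)%nat < fP n) /\
  (forall r : nat, (r = 4 \/ r = 6)%nat ->
     C (r - 1)%nat 2 * fP (n - r)%nat + INR (r - 1)%nat * gP (n - r - 1)%nat
       + Rpower 6 (INR (n - r - 1)%nat / 5) < fP n) /\
  (forall r : nat, (r = 4 \/ r = 6)%nat ->
     C (r - 1)%nat 2 * fP (n - r)%nat + fP 4 / gP 4 * INR (r - 1)%nat * gP (n - r - 1)%nat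
       + gP (n - r - 3)%nat < fP n).

Proof.
  destruct (Nat.le_gt_cases n 37) as [hle|hgt].
  - assert (n = 14 \/ n = 15 \/ n = 16 \/ n = 17 \/ n = 18 \/ n = 19 \/ n = 20 \/ n = 21 \/ n = 22 \/ n = 23 \/ n = 24 \/ n = 25 \/ n = 26 \/ n = 27 \/ n = 28 \/ n = 29 \/ n = 30 \/ n = 31 \/ n = 32 \/ n = 33 \/ n = 34 \/ n = 35 \/ n = 36 \/ n = 37)%nat as hc by lia.
    repeat destruct hc as [hc|hc]; subst n;
    repeat split; intros r hr; repeat destruct hr as [hr|hr]; subst r; conc.
  - destruct (Nat.le_exists_sub 38 n) as [m [hm _]]; [lia|]. subst n.
    repeat split; intros r hr; repeat destruct hr as [hr|hr]; subst r; big m.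
Qed.
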